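(* Let $\mathcal{M}$ be a saturated model of Presburger arithmetic, $\mathcal{M}_0\preceq\mathcal{M}$ small, $p(x)\in S_n(\mathcal{M}_0)$ a complete type of dimension $n$ with set of realizations $\mathcal{P}\subseteq\mathcal{M}^n$, and $\alpha:\mathcal{P}\to\mathcal{M}$ a relatively $\mathcal{M}_0$-definable function. Let $a\in\mathcal{P}$ and suppose $q=\mathrm{tp}(\alpha(a)/\mathcal{M}_0)$ is non-algebraic. Let $\mathcal{Q}'$ be the set of elements of $\mathcal{M}$ lying in the same $\mathcal{M}_0$-cut as $\alpha(a)$. Then there are $a^1,a^2\in\mathcal{P}$ such that $\alpha(a^1)<\mathrm{dcl}(a\mathcal{M}_0)\cap\mathcal{Q}'<\alpha(a^2)$.
   Context: Presburger arithmetic is $\mathrm{Th}(\mathbb{Z},+,-,<,0,1,\{\equiv_n\}_n)$. A type over $\mathcal{M}_0$ has dimension $n$ if its realizations $c$ have $\dim(c/\mathcal{M}_0)=n$, where the dimension of a tuple is the size of a maximal dcl-independent subset of its coordinates over $\mathcal{M}_0$. A relatively $\mathcal{M}_0$-definable function on $\mathcal{P}$ is the restriction to $\mathcal{P}$ of an $\mathcal{M}_0$-definable function. Two elements lie in the same $\mathcal{M}_0$-cut if they have the same type over $\mathcal{M}_0$ in the language $\{<\}$. For $X\subseteq\mathcal{M}$, $u<X<v$ means $u<x<v$ for all $x\in X$. *)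

(* Defs.v *)
From Stdlib Require List.
From mathcomp Require Import all_boot all_order all_algebra.
Set Implicit Arguments.
Unset Strict Implicit.
Unset Printing Implicit Defensive.
Import Order.TTheory GRing.Theory Num.Theory.

Record pstruct := PStruct {
  car :> Type;
  s0 : car;
  s1 : car;
  sadd : car -> car -> car;
  sopp : car -> car;
  slt : car -> car -> Prop;
  scong : nat -> car -> car -> Prop  (* scong k x y  means  x ==_{k+1} y *)
}.

(* Terms and formulas with parameters from A; variables are de Bruijn indices. *)
Inductive pterm (A : Type) :=
| TVar (i : nat)
| TPar (a : A)
| TZero
| TOne
| TAdd (t u : pterm A)
| TOpp (t : pterm A).

Inductive pform (A : Type) :=
| FEq (t u : pterm A)
| FLt (t u : pterm A)
| FCong (k : nat) (t u : pterm A)   (* t ==_{k+1} u *)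
| FNot (f : pform A)
| FAnd (f g : pform A)
| FEx (f : pform A).

Arguments TVar {A}. Arguments TZero {A}. Arguments TOne {A}.

Section Semantics.
Variables (M : pstruct) (A : Type) (e : A -> M).

Fixpoint teval (env : seq M) (t : pterm A) : M :=
  match t with
  | TVar i => nth (s0 M) env i   (* unassigned variables get the constant 0 *)
  | TPar a => e a
  | TZero => s0 M
  | TOne => s1 M
  | TAdd t u => sadd (teval env t) (teval env u)
  | TOpp t => sopp (teval env t)
  end.

Fixpoint sat (env : seq M) (f : pform A) : Prop :=
  match f with
  | FEq t u => teval env t = teval env u
  | FLt t u => slt (teval env t) (teval env u)
  | FCong k t u => scong k (teval env t) (teval env u)
  | FNot f => ~ sat env f
  | FAnd f g => sat env f /\ sat env g
  | FEx f => exists x : M, sat (x :: env) f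
  end.
End Semantics.

Definition Zstruct : pstruct :=
  @PStruct int 0%R 1%R (fun x y => (x + y)%R) (fun x => (- x)%R)
    (fun x y => (x < y)%R) (fun k x y => ((k.+1)%:Z %| (x - y)%R)%Z).

Definition presburger (M : pstruct) : Prop :=
  forall f : pform void,
    sat (@of_void Zstruct) [::] f <-> sat (@of_void M) [::] f.

(* e : M0 -> M is an elementary embedding (M0 is identified with its image). *)
Definition elem_emb (M0 M : pstruct) (e : M0 -> M) : Prop :=
  forall (f : pform void) (env : seq M0),
    sat (@of_void M0) env f <-> sat (@of_void M) (map e env) f.

Definition smaller (X Y : Type) : Prop :=
  (exists f : X -> Y, injective f) /\ ~ (exists g : Y -> X, injective g).

(* M is saturated: |M|-saturated, i.e. every 1-type over a parameter set of
   cardinality < |M| which is finitely satisfiable in M is realized in M. *)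
Definition saturated (M : pstruct) : Prop :=
  forall (B : M -> Prop), smaller {x | B x} M ->
  forall q : pform {x | B x} -> Prop,
    (forall l : list (pform {x | B x}), (forall f, List.In f l -> q f) ->
       exists c : M, forall f, List.In f l -> sat (@proj1_sig M B) [:: c] f) ->
    exists c : M, forall f, q f -> sat (@proj1_sig M B) [:: c] f.

Definition finite_set (T : Type) (X : T -> Prop) : Prop :=
  exists s : list T, forall x, X x -> List.In x s.

Section OverM0.
Variables (M0 M : pstruct) (e : M0 -> M).

Definition complete_type (n : nat) (p : pform M0 -> Prop) : Prop :=
  (forall l : list (pform M0), (forall f, List.In f l -> p f) ->
     exists c : n.-tuple M0, forall f, List.In f l -> sat (id : M0 -> M0) c f) /\
  (forall f, p f \/ p (FNot f)).

Definition realizes (n : nat) (p : pform M0 -> Prop) (c : n.-tuple M) : Prop :=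
  forall f, p f -> sat e c f.

Definition in_dcl (X : seq M) (b : M) : Prop :=
  exists f : pform M0, sat e (b :: X) f /\
                      forall y, sat e (y :: X) f -> y = b.

Definition dindep (n : nat) (c : n.-tuple M) (S : {set 'I_n}) : Prop :=
  forall i, i \in S ->
    ~ in_dcl [seq tnth c j | j <- enum (S :\ i)] (tnth c i).

Definition has_dim (n : nat) (c : n.-tuple M) (k : nat) : Prop :=
  exists S : {set 'I_n},
    [/\ dindep c S, (forall i, i \notin S -> ~ dindep c (i |: S)) & #|S| = k].

Definition definable_fun (n : nat) (f : n.-tuple M -> M) : Prop :=
  exists phi : pform M0, forall (c : n.-tuple M) (y : M),
    f c = y <-> sat e ((c : seq M) ++ [:: y]) phi.

Definition rel_definable (n : nat) (p : pform M0 -> Prop)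
    (alpha : n.-tuple M -> M) : Prop :=
  exists f : n.-tuple M -> M, definable_fun f /\
    forall c, realizes p c -> alpha c = f c.

Definition tp1 (b : M) : pform M0 -> Prop := fun f => sat e [:: b] f.

Definition nonalgebraic (q : pform M0 -> Prop) : Prop :=
  forall f, q f -> ~ finite_set (fun y => sat e [:: y] f).

Definition lt_term (t : pterm M0) : Prop :=
  match t with TVar _ | TPar _ => True | _ => False end.

Fixpoint lt_form (f : pform M0) : Prop :=
  match f with
  | FEq t u => lt_term t /\ lt_term u
  | FLt t u => lt_term t /\ lt_term u
  | FCong _ _ _ => False
  | FNot f => lt_form f
  | FAnd f g => lt_form f /\ lt_form g
  | FEx f => lt_form f
  end.

(* y and z lie in the same M0-cut: same type over M0 in the language {<}. *)
Definition same_cut (y z : M) : Prop :=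
  forall f : pform M0, lt_form f -> (sat e [:: y] f <-> sat e [:: z] f).

End OverM0.

(* Main.v *)
Require Import Defs.
From Stdlib Require Import Classical ClassicalEpsilon ProofIrrelevance.
From mathcomp Require Import all_boot all_order all_algebra.
From mathcomp Require Import zify.
Set Implicit Arguments.
Unset Strict Implicit.
Unset Printing Implicit Defensive.
Import Order.TTheory GRing.Theory Num.Theory.

Fixpoint tbind {A B : Type} (s : nat -> pterm B) (tau : A -> pterm B) (t : pterm A) : pterm B :=
  match t with
  | TVar i => s i | TPar a => tau a | TZero => TZero | TOne => TOne
  | TAdd t u => TAdd (tbind s tau t) (tbind s tau u)
  | TOpp t => TOpp (tbind s tau t) end.

Definition tshift {B : Type} (t : pterm B) : pterm B := tbind (fun i => TVar i.+1) (@TPar B) t.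
Definition upv {B : Type} (s : nat -> pterm B) : nat -> pterm B :=
  fun i => match i with 0 => TVar 0 | j.+1 => tshift (s j) end.

Fixpoint fbind {A B : Type} (s : nat -> pterm B) (tau : A -> pterm B) (f : pform A) : pform B :=
  match f with
  | FEq t u => FEq (tbind s tau t) (tbind s tau u)
  | FLt t u => FLt (tbind s tau t) (tbind s tau u)
  | FCong k t u => FCong k (tbind s tau t) (tbind s tau u)
  | FNot f => FNot (fbind s tau f)
  | FAnd f g => FAnd (fbind s tau f) (fbind s tau g)
  | FEx f => FEx (fbind (upv s) (fun a => tshift (tau a)) f)
  end.

Definition scons {T : Type} (x : T) (r : nat -> T) : nat -> T :=
  fun i => match i with 0 => x | j.+1 => r j end.

Section SemF.
Variables (M : pstruct) (A : Type).

Fixpoint tevalF (e : A -> M) (r : nat -> M) (t : pterm A) : M :=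
  match t with
  | TVar i => r i
  | TPar a => e a
  | TZero => s0 M
  | TOne => s1 M
  | TAdd t u => sadd (tevalF e r t) (tevalF e r u)
  | TOpp t => sopp (tevalF e r t)
  end.

Fixpoint satF (e : A -> M) (r : nat -> M) (f : pform A) : Prop :=
  match f with
  | FEq t u => tevalF e r t = tevalF e r u
  | FLt t u => slt (tevalF e r t) (tevalF e r u)
  | FCong k t u => scong k (tevalF e r t) (tevalF e r u)
  | FNot f => ~ satF e r f
  | FAnd f g => satF e r f /\ satF e r g
  | FEx f => exists x : M, satF e (scons x r) f
  end.

Lemma tevalF_ext e e' r r' t : (forall a, e a = e' a) -> (forall i, r i = r' i) ->
  tevalF e r t = tevalF e' r' t.
Proof. move=> He Hr; elim: t => //= [t IHt u IHu|t IHt]; congruence. Qed.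

Lemma satF_ext e e' f : forall r r', (forall a, e a = e' a) -> (forall i, r i = r' i) ->
  (satF e r f <-> satF e' r' f).
Proof.
elim: f => [t u|t u|k t u|f IH|f IHf g IHg|f IH] r r' He Hr /=;
  try (rewrite !(tevalF_ext _ He Hr); tauto).
- by rewrite (IH r r').
- by rewrite (IHf r r') // (IHg r r').
- have key : forall x, satF e (scons x r) f <-> satF e' (scons x r') f.
    by move=> x; apply: IH => // -[|i] //=.
  by split=> -[x Hx]; exists x; apply/key.
Qed.

Definition envf (env : seq M) : nat -> M := fun i => nth (s0 M) env i.

Lemma teval_F e env t : teval e env t = tevalF e (envf env) t.
Proof. by elim: t => //= [t -> u ->|t ->]. Qed.

Lemma sat_F e f : forall env, sat e env f <-> satF e (envf env) f.
Proof.
elim: f => [t u|t u|k t u|f IH|f IHf g IHg|f IH] env /=; rewrite ?teval_F; try tauto.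
- by rewrite IH.
- by rewrite IHf IHg.
- split=> -[x Hx]; exists x; [rewrite IH in Hx|rewrite IH];
  move: Hx; apply satF_ext => // -[|i] //.
Qed.
End SemF.

Lemma tevalF_bind (M : pstruct) (A B : Type) (e : B -> M) r (s : nat -> pterm B) (tau : A -> pterm B) t :
  tevalF e r (tbind s tau t) = tevalF (fun a => tevalF e r (tau a)) (fun i => tevalF e r (s i)) t.
Proof. by elim: t => //= [t -> u ->|t ->]. Qed.

Lemma tevalF_shift (M : pstruct) (B : Type) (e : B -> M) r x t :
  tevalF e (scons x r) (tshift t) = tevalF e r t.
Proof. by elim: t => //= [t -> u ->|t ->]. Qed.

Lemma satF_bind (M : pstruct) (A B : Type) (f : pform A) : forall (e : B -> M) r
  (s : nat -> pterm B) (tau : A -> pterm B),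
  satF e r (fbind s tau f) <-> satF (fun a => tevalF e r (tau a)) (fun i => tevalF e r (s i)) f.
Proof.
elim: f => [t u|t u|k t u|f IH|f IHf g IHg|f IH] e r s tau /=; rewrite ?tevalF_bind; try tauto.
- by rewrite IH.
- by rewrite IHf IHg.
- split=> -[x Hx]; exists x; [rewrite IH in Hx|rewrite IH]; move: Hx; apply satF_ext;
  try (by move=> a; rewrite tevalF_shift); by move=> [|i] //=; rewrite tevalF_shift.
Qed.

Lemma sat_bind (M : pstruct) (A B : Type) (f : pform A) (e : B -> M) env
  (s : nat -> pterm B) (tau : A -> pterm B) (e' : A -> M) (r : nat -> M) :
  (forall a, tevalF e (envf env) (tau a) = e' a) ->
  (forall i, tevalF e (envf env) (s i) = r i) ->
  (sat e env (fbind s tau f) <-> satF e' r f).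
Proof. move=> H1 H2; rewrite sat_F satF_bind; exact: satF_ext. Qed.

Fixpoint fconj {A : Type} (l : seq (pform A)) : pform A :=
  match l with [::] => FEq TZero TZero | f :: l => FAnd f (fconj l) end.

Fixpoint exn {A : Type} (k : nat) (f : pform A) : pform A :=
  match k with 0 => f | k.+1 => FEx (exn k f) end.

Definition fall {A : Type} (k : nat) (f : pform A) : pform A := FNot (exn k (FNot f)).

Section SatB.
Variables (M : pstruct) (A : Type) (e : A -> M).

Lemma sat_conj env l : sat e env (fconj l) <-> forall f, List.In f l -> sat e env f.
Proof.
elim: l => /= [|f l IH]; first by split=> // _ f [].
rewrite IH; split=> [[H1 H2] g [<-|Hg]|H]; auto.
Qed.

Lemma sat_exn k f : forall env, sat e env (exn k f) <->
  exists zs, size zs = k /\ sat e (zs ++ env) f.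
Proof.
elim: k => /= [|k IH] env.
  by split=> [H|[zs [/size0nil -> H]]] //; exists [::].
split=> [[x /IH [zs [Hs H]]]|[zs [Hs H]]].
  by exists (rcons zs x); rewrite size_rcons Hs cat_rcons.
case/lastP: zs Hs H => [//|zs x]; rewrite size_rcons => -[Hs]; rewrite cat_rcons => H.
by exists x; apply/IH; exists zs.
Qed.

Lemma sat_fall k f env : sat e env (fall k f) <->
  forall zs, size zs = k -> sat e (zs ++ env) f.
Proof.
rewrite /fall /= sat_exn; split=> H.
  by move=> zs Hs; apply: NNPP => Hn; apply: H; exists zs.
by move=> [zs [Hs Hn]]; apply: Hn; apply: H.
Qed.
End SatB.

Lemma list_choice (X Y : Type) (S : Y -> Prop) (R : X -> Y -> Prop) (l : seq X) :
  (forall x, List.In x l -> exists y, S y /\ R x y) ->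
  exists ys, (forall y, List.In y ys -> S y) /\ forall x, List.In x l -> exists y, List.In y ys /\ R x y.
Proof.
elim: l => [|x l IH] H; first by exists [::].
have [ys [H1 H2]] := IH (fun z Hz => H z (or_intror Hz)).
have [y [Sy Ry]] := H x (or_introl erefl).
exists (y :: ys); split=> [z [<-|Hz]|z [<-|Hz]]; auto.
- by exists y; split=> //; left.
- by have [w [Hw Rw]] := H2 z Hz; exists w; split=> //; right.
Qed.

Lemma transferZ (M : pstruct) (G : pform void) k : presburger M ->
  (forall zs : seq int, size zs = k -> sat (@of_void Zstruct) zs G) ->
  forall zs : seq M, size zs = k -> sat (@of_void M) zs G.
Proof.
move=> HP HZ zs Hs.
have H := (proj1 (HP (fall k G))); rewrite !sat_fall in H.
have := H _ zs Hs; rewrite cats0; apply=> zs' Hs'.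
by rewrite cats0; apply: HZ.
Qed.

Definition v0 {A : Type} : pterm A := TVar 0.
Definition v1 {A : Type} : pterm A := TVar 1.
Definition v2 {A : Type} : pterm A := TVar 2.

Section Order.
Variables (M : pstruct) (HP : presburger M).

Lemma slt_trans (x y z : M) : slt x y -> slt y z -> slt x z.
Proof.
move=> H1 H2.
have HZ : forall zs : seq int, size zs = 3 -> sat (@of_void Zstruct) zs
   (FNot (FAnd (FLt v0 v1) (FAnd (FLt v1 v2) (FNot (FLt v0 v2))))).
  by move=> [|a [|b [|c [|]]]] //= _ [h1 [h2 h3]]; apply: h3; apply: lt_trans h1 h2.
have := @transferZ M _ 3 HP HZ [:: x; y; z] erefl => /= H.
by apply: NNPP => Hn; apply: H; tauto.
Qed.

Lemma slt_tri (x y : M) : slt x y \/ x = y \/ slt y x.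
Proof.
have HZ : forall zs : seq int, size zs = 2 -> sat (@of_void Zstruct) zs
  (FNot (FAnd (FNot (FLt v0 v1)) (FAnd (FNot (FEq v0 v1)) (FNot (FLt v1 v0))))).
  move=> [|a [|b [|]]] //= _ [h1 [h2 h3]].
  by case: (ltgtP a b) => h; [apply: h1|apply: h3|apply: h2].
have := @transferZ M _ 2 HP HZ [:: x; y] erefl => /= H. apply: NNPP => Hn; apply: H; split; [|split] => h; apply: Hn; tauto.
Qed.

Lemma slt_irr (x : M) : ~ slt x x.
Proof.
have HZ : forall zs : seq int, size zs = 1 -> sat (@of_void Zstruct) zs (FNot (FLt v0 v0)).
  by move=> [|a [|]] //= _; rewrite ltxx.
exact: (@transferZ M _ 1 HP HZ [:: x] erefl).
Qed.
End Order.

Fixpoint cidx {A : Type} (x : A) (s : seq A) : nat :=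
  match s with [::] => 0
  | y :: s => if excluded_middle_informative (x = y) then 0 else (cidx x s).+1 end.

Lemma nth_map_cidx (A N : Type) (h : A -> N) d x s : List.In x s -> nth d (map h s) (cidx x s) = h x.
Proof.
elim: s => [|y s IH] //= Hx.
case: excluded_middle_informative => [Hxy|Hne]; first by rewrite /= -Hxy.
apply: IH; by case: Hx => // Hy; case: Hne.
Qed.

Fixpoint tplist {A : Type} (t : pterm A) : seq A :=
  match t with TPar a => [:: a] | TAdd t u => tplist t ++ tplist u | TOpp t => tplist t | _ => [::] end.
Fixpoint fplist {A : Type} (f : pform A) : seq A :=
  match f with
  | FEq t u | FLt t u | FCong _ t u => tplist t ++ tplist u
  | FNot f | FEx f => fplist f
  | FAnd f g => fplist f ++ fplist g end.

Lemma tevalF_ext_in (M : pstruct) A (e e' : A -> M) r r' t :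
  (forall a, List.In a (tplist t) -> e a = e' a) -> (forall i, r i = r' i) ->
  tevalF e r t = tevalF e' r' t.
Proof.
move=> He Hr; elim: t He => [i|a| | |t IHt u IHu|t IHt] He //=.
- by apply: He; left.
- by rewrite IHt ?IHu // => b Hb; apply: He; apply: List.in_or_app; tauto.
- by rewrite IHt.
Qed.

Lemma satF_ext_in (M : pstruct) A (e e' : A -> M) f : forall r r',
  (forall a, List.In a (fplist f) -> e a = e' a) -> (forall i, r i = r' i) ->
  (satF e r f <-> satF e' r' f).
Proof.
have Happ : forall (l1 l2 : seq A) (P : A -> Prop), (forall a, List.In a (l1 ++ l2) -> P a) ->
   (forall a, List.In a l1 -> P a) /\ (forall a, List.In a l2 -> P a).
  by move=> l1 l2 P H; split=> a Ha; apply: H; apply: List.in_or_app; tauto.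
elim: f => [t u|t u|k t u|f IH|f IHf g IHg|f IH] r r' He Hr /=;
  try (case: (Happ _ _ _ He) => H1 H2; rewrite (tevalF_ext_in H1 Hr) (tevalF_ext_in H2 Hr); tauto).
- by rewrite (IH r r').
- by case: (Happ _ _ _ He) => H1 H2; rewrite (IHf r r') // (IHg r r').
- have key : forall x, satF e (scons x r) f <-> satF e' (scons x r') f.
    by move=> x; apply: IH => // -[|i] //=.
  by split=> -[x Hx]; exists x; apply/key.
Qed.

Definition abst {A : Type} (k : nat) (ms : seq A) (f : pform A) : pform void :=
  fbind (fun i => if i < k then TVar i else TZero) (fun a => TVar (k + cidx a ms)) f.

Lemma sat_abst (N : pstruct) (A : Type) (h : A -> N) env (f : pform A) :
  sat h env f <-> sat (@of_void N) (env ++ map h (fplist f)) (abst (size env) (fplist f) f).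
Proof.
rewrite sat_F sat_F satF_bind; apply: satF_ext_in => [a Ha|i] /=.
  by rewrite /envf nth_cat ltnNge leq_addr /= addKn nth_map_cidx.
rewrite /envf; case: ifP => Hi /=; first by rewrite nth_cat Hi.
by rewrite nth_default // leqNgt Hi.
Qed.

Section Elem.
Variables (M0 M : pstruct) (e : M0 -> M) (Hemb : elem_emb e).

Lemma eltr (f : pform M0) env0 : sat (fun x : M0 => x) env0 f <-> sat e (map e env0) f.
Proof.
rewrite sat_abst (sat_abst e) size_map Hemb map_cat map_id.
by [].
Qed.

Lemma dcl0 (f : pform M0) : (exists y, sat e [:: y] f) -> exists m0, sat e [:: e m0] f.
Proof.
move=> Hy.
have : sat e [::] (FEx f) by [].
rewrite -(eltr (FEx f) [::]) /= => -[m0 Hm0].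
by exists m0; rewrite (eltr f [:: m0]) in Hm0.
Qed.
End Elem.

Definition rel (M : pstruct) (b : bool) (x y : M) : Prop := if b then slt x y else slt y x.
Definition Rb {A : Type} (b : bool) (t u : pterm A) : pform A := if b then FLt t u else FLt u t.

Lemma satF_Rb (M : pstruct) A (e : A -> M) r b t u :
  satF e r (Rb b t u) <-> rel b (tevalF e r t) (tevalF e r u).
Proof. by case: b. Qed.

Lemma int_least (P : int -> Prop) (bd : int) : (exists y, P y) -> (forall y, P y -> (bd <= y)%R) ->
  exists m, P m /\ forall y, P y -> (m <= y)%R.
Proof.
move=> [y0 Hy0] Hb; apply: NNPP => Hn.
have key : forall n : nat, forall y, P y -> (bd + Posz n <= y)%R.
  elim=> [|n IH] y Hy; first by have := Hb y Hy; lia.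
  have := IH y Hy; case: (eqVneq y (bd + Posz n)%R) => [Heq|Hne] H.
    exfalso; apply: Hn; exists y; split=> // y' Hy'; have := IH y' Hy'; lia.
  by move: Hne => /eqP; lia.
have := key (absz (y0 - bd)).+1 y0 Hy0; lia.
Qed.

Lemma int_ext (P : int -> Prop) (b : bool) : (exists y, P y) ->
  (exists bd, forall y, P y -> ~ rel (M:=Zstruct) b y bd) ->
  exists m, P m /\ forall y, P y -> ~ rel (M:=Zstruct) b y m.
Proof.
case: b => /= -[y0 Hy0] [bd Hbd].
  have Hb' : forall y, P y -> (bd <= y)%R by move=> y Hy; have := Hbd y Hy; lia.
  have [m [Hm Hm']] := @int_least P bd (ex_intro _ y0 Hy0) Hb'.
  by exists m; split=> // y Hy; have := Hm' y Hy; lia.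
have Hb' : forall y, P (- y)%R -> (- bd <= y)%R by move=> y Hy; have := Hbd _ Hy; lia.
have Hy0' : P (- (- y0))%R by rewrite opprK.
have [m [Hm Hm']] := @int_least (fun y => P (- y)%R) (- bd)%R (ex_intro _ (- y0)%R Hy0') Hb'.
by exists (- m)%R; split=> // y Hy; have := Hm' (- y)%R; rewrite opprK => /(_ Hy); lia.
Qed.

Definition ren1 : nat -> pterm void := fun i => match i with 0 => TVar 0 | j.+1 => TVar j.+2 end.

Definition LEPform (b : bool) (psi0 : pform void) : pform void :=
  let Bnd := FNot (FEx (FAnd (fbind ren1 (@TPar void) psi0) (Rb b v0 v1))) in
  FNot (FAnd (FEx psi0) (FAnd (FEx Bnd) (FNot (FEx (FAnd psi0 Bnd))))).

Lemma satF_LEP (N : pstruct) b psi0 (r : nat -> N) :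
  let P := fun y => satF (@of_void N) (scons y r) psi0 in
  satF (@of_void N) r (LEPform b psi0) <->
  ((exists y, P y) -> (exists bd, forall y, P y -> ~ rel b y bd) ->
     exists m, P m /\ forall y, P y -> ~ rel b y m).
Proof.
move=> P.
have E : forall y bd, satF (@of_void N) (scons y (scons bd r)) (fbind ren1 (@TPar void) psi0) <-> P y.
  by move=> y bd; rewrite satF_bind; apply: satF_ext => [[]|[|i]].
rewrite /LEPform /=.
have E2 : forall bd, (~ (exists y, satF (@of_void N) (scons y (scons bd r)) (fbind ren1 (@TPar void) psi0) /\
      satF (@of_void N) (scons y (scons bd r)) (Rb b v0 v1))) <-> forall y, P y -> ~ rel b y bd.
  move=> bd; split=> [H y Hy Hr|H [y [Hy Hr]]].
    by apply: H; exists y; rewrite E satF_Rb.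
  by rewrite E in Hy; rewrite satF_Rb in Hr; exact: H y Hy Hr.
split=> [H [y Hy] [bd Hbd]|H [[y Hy] [[bd Hbd] Hn]]].
- apply: NNPP => Hn; apply: H; split; first by exists y.
  split; first by exists bd; apply/E2.
  by move=> [m [Hm Hm']]; apply: Hn; exists m; split=> //; apply/E2.
- have [m [Hm Hm']] := H (ex_intro _ y Hy) (ex_intro _ bd (proj1 (E2 bd) Hbd)).
  by apply: Hn; exists m; split=> //; apply/E2.
Qed.

Section LEP.
Variables (M0 M : pstruct) (e : M0 -> M) (HP : presburger M).

Lemma LEP (psi : pform M0) b :
  (exists y, sat e [:: y] psi) -> (exists bd, forall y, sat e [:: y] psi -> ~ rel b y bd) ->
  exists m, sat e [:: m] psi /\ forall y, sat e [:: y] psi -> ~ rel b y m.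
Proof.
set ms := fplist psi; set psi0 := abst 1 ms psi.
have E : forall y, sat e [:: y] psi <-> satF (@of_void M) (scons y (envf (map e ms))) psi0.
  move=> y; rewrite sat_abst sat_F; apply: satF_ext => // -[|i] //.
have HZ : forall zs : seq int, size zs = size ms -> sat (@of_void Zstruct) zs (LEPform b psi0).
  move=> zs _; rewrite sat_F satF_LEP; exact: int_ext.
have := @transferZ M _ _ HP HZ (map e ms) (size_map _ _).
rewrite sat_F satF_LEP => H H1 H2.
have [y Hy] := H1; have [bd Hbd] := H2.
have [m [Hm Hm']] := H (ex_intro _ y (proj1 (E y) Hy)) (ex_intro _ bd (fun y Hy => Hbd y (proj2 (E y) Hy))).
by exists m; split; [apply/E|move=> y' Hy'; apply: Hm'; apply/E].
Qed.
End LEP.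

Fixpoint num {A : Type} (k : nat) : pterm A :=
  match k with 0 => TZero | k.+1 => TAdd (num k) TOne end.

Lemma teval_numZ k : teval (@of_void Zstruct) [::] (num k) = Posz k.
Proof. elim: k => //= k ->; rewrite /=; lia. Qed.

Lemma sig_inj (T : Type) (P : T -> Prop) (x y : {z | P z}) : proj1_sig x = proj1_sig y -> x = y.
Proof. case: x y => [x Hx] [y Hy] /= Exy; subst y; f_equal; apply: proof_irrelevance. Qed.

Section Small.
Variables (M0 M : pstruct) (e : M0 -> M).
Hypotheses (HP : presburger M) (Hemb : elem_emb e) (Hs : smaller M0 M).

Definition gL (L : seq M) (x : M0 + nat) : M :=
  match x with inl m => e m | inr i => nth (s0 M) L i end.
Definition Bset (L : seq M) (m : M) : Prop := exists x, gL L x = m.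

Definition N0 (k : nat) : M0 := teval (@of_void M0) [::] (num k).

Lemma N0_inj : injective N0.
Proof.
move=> k j H; apply: NNPP => Hne.
have HZ : sat (@of_void Zstruct) [::] (FNot (FEq (num k) (num j))).
  by rewrite /= !teval_numZ => -[E]; apply: Hne.
rewrite HP -(Hemb _ [::]) in HZ; exact: HZ H.
Qed.

Definition Jm (x : M0 + nat) : M0 :=
  match x with
  | inl m => match excluded_middle_informative (exists k, N0 k = m) with
             | left H => N0 (2 * proj1_sig (constructive_indefinite_description _ H))
             | right _ => m end
  | inr i => N0 (2 * i).+1 end.

Lemma Jm_inl m : (exists k, N0 k = m /\ Jm (inl m) = N0 (2 * k)) \/
                 ((~ exists k, N0 k = m) /\ Jm (inl m) = m).
Proof.
rewrite /Jm; case: excluded_middle_informative => H; [left|by right].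
set s := constructive_indefinite_description _ H.
by exists (proj1_sig s); split; [exact: (proj2_sig s)|].
Qed.

Lemma Jm_inj : injective Jm.
Proof.
have odd_ne : forall a b : nat, 2 * a <> (2 * b).+1 by move=> a b; lia.
move=> [m|i] [m'|i'].
- case: (Jm_inl m) => [[k [Hk ->]]|[H ->]]; case: (Jm_inl m') => [[k' [Hk' ->]]|[H' ->]].
  + move=> /N0_inj E; have Ek : k = k' by [lia]. by rewrite -Hk -Hk' Ek.
  + by move=> E; case: H'; exists (2 * k).
  + by move=> E; case: H; exists (2 * k'); rewrite E.
  + by move=> ->.
- case: (Jm_inl m) => [[k [Hk ->]]|[H ->]] /=.
    by move=> /N0_inj /odd_ne.
  by move=> E; case: H; exists (2 * i').+1.
- case: (Jm_inl m') => [[k [Hk ->]]|[H ->]] /=.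
    by move=> /N0_inj E; case: (odd_ne k i); rewrite E.
  by move=> E; case: H; exists (2 * i).+1.
- by move=> /N0_inj E; congr inr; lia.
Qed.

Lemma small_B L : smaller {m | Bset L m} M.
Proof.
split; first by exists (@proj1_sig M (Bset L)) => x y; apply: sig_inj.
move=> [h hinj]; case: Hs => _; apply.
pose pick := fun m => proj1_sig (constructive_indefinite_description _ (proj2_sig (h m))).
have Hpick : forall m, gL L (pick m) = proj1_sig (h m).
  by move=> m; rewrite /pick; case: constructive_indefinite_description.
exists (fun m => Jm (pick m)) => m m' /Jm_inj E.
by apply: hinj; apply: sig_inj; rewrite -!Hpick E.
Qed.
End Small.

Lemma sat_fmap (N : pstruct) (A B : Type) (g : A -> B) (h : B -> N) env f :
  sat h env (fbind TVar (fun a => TPar (g a)) f) <-> sat (fun a => h (g a)) env f.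
Proof. by rewrite !sat_F satF_bind; apply: satF_ext. Qed.

Section Realize.
Variables (M0 M : pstruct) (e : M0 -> M).
Hypotheses (HP : presburger M) (Hemb : elem_emb e) (Hs : smaller M0 M) (Hsat : saturated M).

Definition iota (L : seq M) (x : M0 + nat) : {m | Bset e L m} :=
  exist _ (gL e L x) (ex_intro _ x erefl).

Lemma realize n : forall L (Sig : pform (M0 + nat) -> Prop),
  (forall l, (forall f, List.In f l -> Sig f) ->
     exists c : seq M, size c = n /\ forall f, List.In f l -> sat (gL e L) c f) ->
  exists c : seq M, size c = n /\ forall f, Sig f -> sat (gL e L) c f.
Proof.
elim: n => [|n IH] L Sig Hfin.
  exists [::]; split=> // f Hf.
  have H1 : forall g, List.In g [:: f] -> Sig g by move=> g [<-|[]].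
  by have [c [/size0nil Hc Hc']] := Hfin [:: f] H1; rewrite -Hc; apply: Hc'; left.
pose q := fun psi => exists l, (forall f, List.In f l -> Sig f) /\
   psi = fbind TVar (fun x => TPar (iota L x)) (exn n (fconj l)).
have Hq : forall lq, (forall psi, List.In psi lq -> q psi) ->
    exists y : M, forall psi, List.In psi lq -> sat (@proj1_sig M (Bset e L)) [:: y] psi.
  move=> lq Hlq.
  have [ls [Hls Hls']] := @list_choice _ _ (fun l => forall f, List.In f l -> Sig f)
     (fun psi l => psi = fbind TVar (fun x => TPar (iota L x)) (exn n (fconj l))) lq Hlq.
  have Hcc : forall f, List.In f (List.concat ls) -> Sig f.
    by move=> f /List.in_concat [l [Hl Hfl]]; exact: Hls l Hl f Hfl.
  have [c [Hc Hc']] := Hfin (List.concat ls) Hcc.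
  case/lastP: c Hc Hc' => [//|zs y]; rewrite size_rcons => -[Hzs] Hc'.
  exists y => psi Hpsi; have [l [Hl ->]] := Hls' psi Hpsi.
  rewrite sat_fmap sat_exn; exists zs; split=> //; rewrite cats1 sat_conj => f Hf.
  by apply: Hc'; apply/List.in_concat; exists l.
have [y Hy] := Hsat (small_B HP Hemb Hs L) Hq.
pose L' := rcons L y.
pose r := fun x : M0 + nat => match x with inl m => inl m
   | inr i => if i < size L then inr i else inr (size L).+1 end.
pose sg := fun i => if i == n then TPar (inr (size L)) else @TVar (M0 + nat) i.
pose tr := fun f : pform (M0 + nat) => fbind sg (fun x => TPar (r x)) f.
have key : forall zs, size zs = n -> forall f, sat (gL e L') zs (tr f) <-> sat (gL e L) (rcons zs y) f.
  move=> zs Hzs f; rewrite !sat_F satF_bind; apply: satF_ext => [[m|i]|i] //=.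
    case: ifP => Hi /=; rewrite /L' nth_rcons; first by rewrite Hi.
    have -> : ((size L).+1 < size L) = false by lia.
    have -> : ((size L).+1 == size L) = false by lia.
    by rewrite nth_default // leqNgt Hi.
  rewrite /sg /envf nth_rcons Hzs; case: eqP => [->|Hne] /=.
    by rewrite /L' nth_rcons !ltnn eqxx.
  by case: ifP => // Hi; rewrite nth_default // Hzs leqNgt Hi.
pose Sig' := fun f' => exists f, Sig f /\ f' = tr f.
have Hfin' : forall l', (forall f', List.In f' l' -> Sig' f') ->
    exists c : seq M, size c = n /\ forall f', List.In f' l' -> sat (gL e L') c f'.
  move=> l' Hl'.
  have [l [Hl Hl2]] := @list_choice _ _ Sig (fun f' f => f' = tr f) l' Hl'.
  have := Hy (fbind TVar (fun x => TPar (iota L x)) (exn n (fconj l))) (ex_intro _ l (conj Hl erefl)).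
  rewrite sat_fmap sat_exn => -[zs [Hzs Hsz]]; exists zs; split=> // f' Hf'.
  have [f [Hf ->]] := Hl2 f' Hf'; rewrite key // -cats1.
  by move: Hsz; rewrite sat_conj; apply.
have [zs [Hzs Hzs']] := IH L' Sig' Hfin'.
exists (rcons zs y); split; first by rewrite size_rcons Hzs.
by move=> f Hf; rewrite -key //; apply: Hzs'; exists f.
Qed.
End Realize.

Lemma rel_tri (M : pstruct) (HP : presburger M) b (x y : M) : rel b x y \/ x = y \/ rel b y x.
Proof. by case: b (slt_tri HP x y) => /=; tauto. Qed.
Lemma rel_trans (M : pstruct) (HP : presburger M) b (x y z : M) : rel b x y -> rel b y z -> rel b x z.
Proof. by case: b => /= H1 H2; [apply: slt_trans H1 H2|apply: slt_trans H2 H1]. Qed.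
Lemma rel_irr (M : pstruct) (HP : presburger M) b (x : M) : ~ rel b x x.
Proof. by case: b; apply: slt_irr. Qed.

Lemma extreme (M : pstruct) (HP : presburger M) b (ds : seq M) : ds <> [::] ->
  exists d, List.In d ds /\ forall d', List.In d' ds -> ~ rel b d' d.
Proof.
elim: ds => [//|d ds IH] _.
case: ds IH => [|d1 ds] IH.
  by exists d; split; [left|move=> d' [<-|[]]; apply: (rel_irr HP)].
have [ds' [Hin Hmin]] := IH (fun H : d1 :: ds = [::] => ltac:(discriminate H)).
case: (rel_tri HP b d ds') => [Hlt|Heq].
  exists d; split; first by left.
  move=> d' [<-|Hd']; first exact: (rel_irr HP).
  by move=> Hr; apply: (Hmin d' Hd'); apply: rel_trans Hr Hlt.
exists ds'; split; first by right.
move=> d' [<-|Hd']; last exact: Hmin.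
case: Heq => [->|H1 H2]; first exact: (rel_irr HP). exact: (rel_irr HP (rel_trans HP H2 H1)).
Qed.

Section Main.
Variables (M0 M : pstruct) (e : M0 -> M) (n : nat) (p : pform M0 -> Prop)
  (alpha : n.-tuple M -> M) (a : n.-tuple M).
Hypotheses (HP : presburger M) (Hsat : saturated M) (Hemb : elem_emb e) (Hs : smaller M0 M)
  (Hcomp : complete_type n p) (Ha : realizes e p a) (Hna : nonalgebraic e (tp1 e (alpha a))).
Variables (fdef : n.-tuple M -> M) (phi : pform M0).
Hypotheses (Hphi : forall c y, fdef c = y <-> sat e ((c : seq M) ++ [:: y]) phi)
  (Hal : forall c, realizes e p c -> alpha c = fdef c).

Definition mkt (zs : seq M) (H : size zs = n) : n.-tuple M := Tuple (introT eqP H).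

Definition finl (f : pform M0) : pform (M0 + nat) := fbind TVar (fun m => TPar (inl m)) f.

Lemma sat_finl x f : sat (gL e a) x (finl f) <-> sat e x f.
Proof. exact: sat_fmap. Qed.

Definition sphi : nat -> pterm (M0 + nat) :=
  fun i => if i < n then TVar i.+2 else if i == n then TVar 1 else TZero.
Definition schi : nat -> pterm (M0 + nat) :=
  fun i => match i with 0 => TVar 0 | j.+1 => TPar (inr j) end.
Definition Fd (b : bool) (chi : pform M0) : pform (M0 + nat) :=
  FEx (FEx (FAnd (fbind sphi (fun m => TPar (inl m)) phi)
                 (FAnd (fbind schi (fun m => TPar (inl m)) chi) (Rb b v1 v0)))).

Lemma sat_Fd b chi x : size x = n -> (sat (gL e a) x (Fd b chi) <->
  exists y z, sat e (x ++ [:: y]) phi /\ sat e (z :: a) chi /\ rel b y z).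
Proof.
move=> Hx; rewrite sat_F /=.
have E1 : forall y z, satF (gL e a) (scons z (scons y (envf x))) (fbind sphi (fun m => TPar (inl m)) phi)
   <-> sat e (x ++ [:: y]) phi.
  move=> y z; rewrite sat_F satF_bind; apply: satF_ext => // i.
  rewrite /sphi /envf nth_cat Hx; case: ifP => // Hi.
  case: eqP => [->|Hne] /=; first by rewrite subnn.
  rewrite nth_default //=; lia.
have E2 : forall y z, satF (gL e a) (scons z (scons y (envf x))) (fbind schi (fun m => TPar (inl m)) chi)
   <-> sat e (z :: a) chi.
  by move=> y z; rewrite sat_F satF_bind; apply: satF_ext => // -[|i].
split=> [[y [z [H1 [H2 H3]]]]|[y [z [H1 [H2 H3]]]]]; exists y, z.
  by split; [exact/(E1 y z)|split; [exact/(E2 y z)|by rewrite satF_Rb in H3]].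
by split; [exact/(E1 y z)|split; [exact/(E2 y z)|by rewrite satF_Rb]].
Qed.

Definition sth : nat -> pterm M0 := fun i => if i < n then TVar i else TZero.
Definition psiF (th : pform M0) : pform M0 := exn n (FAnd (fbind sth (@TPar M0) th) phi).

Lemma sat_psiF th y : sat e [:: y] (psiF th) <->
  exists x, size x = n /\ sat e x th /\ sat e (x ++ [:: y]) phi.
Proof.
have E : forall x, size x = n -> sat e (x ++ [:: y]) (fbind sth (@TPar M0) th) <-> sat e x th.
  move=> x Hx; rewrite !sat_F satF_bind; apply: satF_ext => // i.
  rewrite /sth /envf; case: ifP => Hi /=; first by rewrite nth_cat Hx Hi.
  rewrite nth_default //; lia.
rewrite sat_exn; split=> -[x [Hx H]]; exists x; split=> //.
  by move: H => /= [H1 H2]; rewrite E in H1.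
by move: H => [H1 H2] /=; rewrite E.
Qed.

Definition s0v : nat -> pterm M0 := fun i => if i == 0 then TVar 0 else TZero.
Definition psiM (b : bool) (psi : pform M0) : pform M0 :=
  FAnd psi (FNot (FEx (FAnd (fbind s0v (@TPar M0) psi) (Rb b v0 v1)))).

Lemma sat_psiM b psi m : sat e [:: m] (psiM b psi) <->
  sat e [:: m] psi /\ forall y, sat e [:: y] psi -> ~ rel b y m.
Proof.
have E : forall y, sat e [:: y; m] (fbind s0v (@TPar M0) psi) <-> sat e [:: y] psi.
  move=> y; rewrite !sat_F satF_bind; apply: satF_ext => // -[|[|i]] //.
rewrite /psiM /=; split=> -[H1 H2]; split=> //.
  by move=> y Hy Hr; apply: H2; exists y; rewrite E; split=> //; rewrite sat_F satF_Rb in Hr *.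
move=> [y [Hy Hr]]; rewrite E in Hy; apply: (H2 y Hy).
by have := Hr; rewrite -/(sat e [:: y; m] (Rb b v0 v1)) sat_F satF_Rb.
Qed.

Lemma key_claim b th dst : sat e a th -> in_dcl e a dst -> same_cut e dst (alpha a) ->
  exists x y, [/\ size x = n, sat e x th, sat e (x ++ [:: y]) phi & rel b y dst].
Proof.
move=> Hth _ Hcut; apply: NNPP => Hn.
have Hbd : forall y, sat e [:: y] (psiF th) -> ~ rel b y dst.
  move=> y /sat_psiF [x [Hx [H1 H2]]] Hr; apply: Hn; by exists x, y.
have Hphia : sat e (a ++ [:: alpha a]) phi by rewrite -Hphi Hal.
have Hya : sat e [:: alpha a] (psiF th) by apply/sat_psiF; exists a; rewrite size_tuple.
have [m [Hm Hm']] := LEP HP (ex_intro (fun y => sat e [:: y] (psiF th)) _ Hya) (ex_intro _ dst Hbd).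
have Hex : exists y, sat e [:: y] (psiM b (psiF th)) by exists m; apply/sat_psiM.
have [m0 /sat_psiM [Hm0 Hm0']] := dcl0 Hemb Hex.
have H1 : ~ rel b (alpha a) (e m0) := Hm0' _ Hya.
have H2 : ~ rel b (e m0) dst := Hbd _ Hm0.
have H3 : alpha a <> e m0.
  move=> E; apply: (Hna (f := FEq v0 (TPar m0))) => //; exists [:: e m0] => z /= ->; by left.
have H4 : dst <> e m0.
  move=> E; apply: H3; have := Hcut (FEq v0 (TPar m0)) (conj I I); rewrite /= E; tauto.
have H5 : rel b dst (e m0).
  by case: (rel_tri HP b (e m0) dst) => [//|[E|//]]; case: H4.
have Hlt : lt_form (Rb b v0 (TPar m0)) by rewrite /Rb; case: ifP.
apply: H1; have := Hcut (Rb b v0 (TPar m0)) Hlt; rewrite !sat_F !satF_Rb /=.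
by move=> -[H _]; apply: H.

Qed.

Lemma one_side b : exists a1 : n.-tuple M, realizes e p a1 /\
  forall d, in_dcl e a d -> same_cut e d (alpha a) -> rel b (alpha a1) d.
Proof.
pose D := fun d => in_dcl e a d /\ same_cut e d (alpha a).
pose Sig := fun F => (exists f, p f /\ F = finl f) \/
   (exists chi d, [/\ sat e (d :: a) chi, (forall y, sat e (y :: a) chi -> y = d), D d & F = Fd b chi]).
have Htriv : p (FEq TZero TZero).
  case: (proj2 Hcomp (FEq TZero TZero)) => // H; by case: (Ha H).
have Hfin : forall l, (forall F, List.In F l -> Sig F) ->
    exists c : seq M, size c = n /\ forall F, List.In F l -> sat (gL e a) c F.
  move=> l Hl.
  pose S := fun yd : pform M0 * option M => p yd.1 /\ forall d, yd.2 = Some d -> D d.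
  pose R := fun F (yd : pform M0 * option M) => match yd.2 with None => F = finl yd.1
       | Some d => exists chi, [/\ sat e (d :: a) chi, (forall y, sat e (y :: a) chi -> y = d) & F = Fd b chi] end.
  have Hch : forall F, List.In F l -> exists yd, S yd /\ R F yd.
    move=> F HF; case: (Hl F HF) => [[f [Hf ->]]|[chi [d [H1 H2 H3 ->]]]].
      by exists (f, None).
    by exists (FEq TZero TZero, Some d); split; [split=> // d' [<-]|exists chi].
  have [ys [Hys Hys']] := list_choice Hch.
  pose th := fconj (List.map fst ys).
  have Hth : forall x, sat e x th <-> forall yd, List.In yd ys -> sat e x yd.1.
    move=> x; rewrite sat_conj; split=> H.
      by move=> yd Hyd; apply: H; apply: List.in_map.
    by move=> f /List.in_map_iff [yd [<- Hyd]]; apply: H.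
  pose ds := List.flat_map (fun yd : pform M0 * option M => match yd.2 with Some d => [:: d] | None => [::] end) ys.
  have Hds : forall d, List.In d ds <-> exists yd, List.In yd ys /\ yd.2 = Some d.
    move=> d; rewrite List.in_flat_map; split=> -[yd [Hyd Hd]]; exists yd; split=> //.
      by case: yd.2 Hd => [d'|] // [<-|[]].
    by rewrite Hd; left.
  have [x [y [Hx Hthx Hphix Hrel]]] : exists x y, [/\ size x = n, sat e x th, sat e (x ++ [:: y]) phi &
       forall d, List.In d ds -> rel b y d].
    have Htha : sat e a th by apply/Hth => yd Hyd; apply: Ha; exact: (proj1 (Hys yd Hyd)).
    case: (classic (ds = [::])) => [Hnil|Hne].
      exists a, (alpha a); split; rewrite ?size_tuple //; first by rewrite -Hphi Hal.
      by rewrite Hnil.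
    have [dst [Hdst Hmin]] := extreme HP b Hne.
    have [yd [Hyd Hyd2]] := proj1 (Hds dst) Hdst.
    have [Ddst1 Ddst2] := proj2 (Hys yd Hyd) dst Hyd2.
    have [x [y [Hx H1 H2 H3]]] := key_claim b Htha Ddst1 Ddst2.
    exists x, y; split=> // d Hd.
    case: (rel_tri HP b d dst) => [Hr|[->//|Hr]]; first by case: (Hmin d Hd).
    exact: rel_trans H3 Hr.
  exists x; split=> // F HF.
  have [[f od] [Hyd HR]] := Hys' F HF.
  case: od Hyd HR => [d|] Hyd /= HR.
    case: HR => chi [H1 H2 ->]; apply/sat_Fd => //; exists y, d; split=> //; split=> //.
    by apply: Hrel; apply/Hds; exists (f, Some d).
  by rewrite HR sat_finl; exact: (proj1 (Hth x) Hthx (f, None) Hyd).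
have [c [Hc Hc']] := realize HP Hemb Hs Hsat (L := a) Hfin.
have Hrc : realizes e p (mkt Hc).
  by move=> f Hf; rewrite -sat_finl; apply: Hc'; left; exists f.
exists (mkt Hc); split=> // d [chi [Hchi Hun]] Hcut.
have := Hc' (Fd b chi) (or_intror (ex_intro _ chi (ex_intro _ d (And4 Hchi Hun (conj (ex_intro _ chi (conj Hchi Hun)) Hcut) erefl)))).
rewrite sat_Fd // => -[y [z [H1 [H2 H3]]]].
rewrite (Hun z H2) in H3.
by rewrite Hal // (proj2 (Hphi (mkt Hc) y) H1).
Qed.
End Main.

Theorem lemma4p3 (M0 M : pstruct) (e : car M0 -> car M) (n : nat)
  (p : pform (car M0) -> Prop) (alpha : n.-tuple (car M) -> car M) (a : n.-tuple (car M)) :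
  presburger M -> saturated M -> elem_emb e -> smaller (car M0) (car M) ->
  complete_type n p ->
  (forall c : n.-tuple (car M), realizes e p c -> has_dim e c n) ->
  rel_definable e p alpha ->
  realizes e p a ->
  nonalgebraic e (tp1 e (alpha a)) ->
  exists a1 a2 : n.-tuple (car M),
    [/\ realizes e p a1, realizes e p a2 &
        forall d : car M, in_dcl e a d -> same_cut e d (alpha a) ->
          slt (alpha a1) d /\ slt d (alpha a2)].
Proof.
move=> HP Hsat Hemb Hs Hcomp _ [fdef [[phi Hphi] Hal]] Ha Hna.
have [a1 [Hr1 H1]] := one_side HP Hsat Hemb Hs Hcomp Ha Hna Hphi Hal true.
have [a2 [Hr2 H2]] := one_side HP Hsat Hemb Hs Hcomp Ha Hna Hphi Hal false.
exists a1, a2; split=> // d Hd Hc; split; [exact: H1 Hd Hc|exact: H2 Hd Hc].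
Qed.
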